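(* Let $\mathcal{X}=\prod_{r=1}^d\mathcal{Z}_r$ be a product of nonempty convex compact subsets of Euclidean spaces and let $F$ be an $L$-Lipschitz continuous operator on $\mathcal{X}$ (with values in the ambient Euclidean space), with components $F=(F_1,\dots,F_d)$ and $B_F:=\max_{1\le r\le d}\sup_{x\in\mathcal{X}}\|F_r(x)\|_2$. Suppose the average $(\alpha,\ell,h)$-generalized Minty property (defined in the context) holds. Then for any $\epsilon>0$, after $T\ge \frac{2D_{\mathcal{X}}^2h}{\ell\epsilon^2}$ iterations of the rescaled optimistic gradient descent with learning rate $\eta\le\frac14\sqrt{\frac{\ell}{h^3L^2+hB_F^2\alpha^2d}}$, there is an iterate $x^{(t)}$, $t\in\{1,\dots,T\}$, such that for every $x^\star\in\mathcal{X}$, $$\langle x^{(t)},F(x^{(t)})\rangle-\langle x^\star,F(x^{(t)})\rangle\le 2d\Big(\frac{\max_{1\le r\le d}D_{\mathcal{Z}_r}}{\eta\ell}+\frac{hB_F}{\ell}\Big)\epsilon .$$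
   Context: $D_{\mathcal{Y}}$ denotes the $\ell_2$ diameter of a set $\mathcal{Y}$. $\mathbf{1}_{\mathcal{Z}_r}$ is the vector with $1$ on the coordinates of the component $\mathcal{Z}_r$ and $0$ elsewhere; $\circ$ is the coordinatewise product and inequalities between vectors are coordinatewise. Let $A(x)=\sum_{r=1}^d a_r(x)\mathbf{1}_{\mathcal{Z}_r}$, where each $a_r:\mathcal{X}\to\mathbb{R}$ is $\alpha$-Lipschitz and $0<\ell\le A(x)\le h$ for all $x$, and $W(x)=\sum_{r=1}^d w_r(x)\mathbf{1}_{\mathcal{Z}_r}$ with $0<\ell\le W(x)\le h$. The average $(\alpha,\ell,h)$-generalized Minty property holds (for $F,A,W$) if for every $T$ and every sequence $(x^{(t)})_{1\le t\le T}$ in $\mathcal{X}$ there is $x^\star\in\mathcal{X}$ (depending on the sequence) with $\sum_{t=1}^T\langle x^{(t)}-x^\star, F(x^{(t)})\circ A(x^{(t)})\circ W(x^\star)\rangle\ge0$. Rescaled optimistic gradient descent with learning rate $\eta>0$: from arbitrary $x^{(0)}=\hat x^{(1)}\in\mathcal{X}$, for $t\ge1$: $x^{(t)}=\Pi_{\mathcal{X}}(\hat x^{(t)}-\eta A(x^{(t-1)})\circ F(x^{(t-1)}))$, $\hat x^{(t+1)}=\Pi_{\mathcal{X}}(\hat x^{(t)}-\eta A(x^{(t)})\circ F(x^{(t)}))$, with $\Pi_{\mathcal{X}}$ the Euclidean projection onto $\mathcal{X}$. *)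

(* Defs.v *)
From HB Require Import structures.
From mathcomp Require Import all_boot all_order all_algebra.
From mathcomp Require Import all_classical all_reals all_analysis.
Set Implicit Arguments. Unset Strict Implicit. Unset Printing Implicit Defensive.
Import Order.TTheory GRing.Theory Num.Theory.
Import numFieldTopology.Exports numFieldNormedType.Exports.
Local Open Scope classical_set_scope.
Local Open Scope ring_scope.

Section Defs.
Variables (R : realType) (n d : nat).
Notation vec := 'rV[R]_n.

Definition inner (u v : vec) : R := \sum_(i < n) u 0 i * v 0 i.
Definition enorm (u : vec) : R := Num.sqrt (inner u u).

Definition hadamard (u v : vec) : vec := \row_i (u 0 i * v 0 i).

Definition diam (Y : set vec) : R :=
  sup [set enorm (a - b) | a in Y & b in Y].

(* The coordinates 'I_n are partitioned into d blocks by blk : 'I_n -> 'I_d;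
   block r carries the factor Z_r. *)
Variable blk : 'I_n -> 'I_d.

Definition ind (r : 'I_d) : vec := \row_i (if blk i == r then 1 else 0).

Definition blockproj (r : 'I_d) (x : vec) : vec := hadamard (ind r) x.

Definition blockfun (a : 'I_d -> vec -> R) (x : vec) : vec :=
  \sum_(r < d) a r x *: ind r.

(* X = prod_r Z_r, where Z r is a subset of vectors supported on block r *)
Definition prodset (Z : 'I_d -> set vec) : set vec :=
  [set x | forall r, Z r (blockproj r x)].

Definition is_proj (Y : set vec) (y p : vec) : Prop :=
  Y p /\ forall z, Y z -> enorm (y - p) <= enorm (y - z).

Definition avg_gen_minty (X : set vec) (F A W : vec -> vec) : Prop :=
  forall (T : nat) (x : nat -> vec),
    (forall t, (1 <= t <= T)%N -> X (x t)) ->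
    exists2 xs, X xs &
      0 <= \sum_(1 <= t < T.+1) inner (x t - xs) (hadamard (hadamard (F (x t)) (A (x t))) (W xs)).

Definition BF (X : set vec) (F : vec -> vec) : R :=
  \big[Num.max/0]_(r < d) sup [set enorm (blockproj r (F x)) | x in X].

Definition maxdiam (Z : 'I_d -> set vec) : R :=
  \big[Num.max/0]_(r < d) diam (Z r).

End Defs.

(* Main.v *)
Require Import Defs.
From HB Require Import structures.
From mathcomp Require Import all_boot all_order all_algebra.
From mathcomp Require Import all_classical all_reals all_analysis.
From mathcomp Require Import ring lra.
Import Order.TTheory GRing.Theory Num.Theory.
Import numFieldTopology.Exports numFieldNormedType.Exports.
Local Open Scope classical_set_scope.
Local Open Scope ring_scope.

Section S.
Variables (R : realType) (n d : nat) (blk : 'I_n -> 'I_d).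
Local Notation vec := 'rV[R]_n.

Lemma indE r i : ind R blk r 0 i = (blk i == r)%:R.
Proof. by rewrite mxE; case: eqP. Qed.

Lemma blockprojE r (x : vec) i :
  blockproj blk r x 0 i = if blk i == r then x 0 i else 0.
Proof. by rewrite /blockproj /hadamard !mxE; case: eqP => _; rewrite ?mul1r ?mul0r. Qed.

Lemma blockfunE (a : 'I_d -> vec -> R) x i : blockfun blk a x 0 i = a (blk i) x.
Proof.
rewrite /blockfun summxE (bigD1 (blk i)) //= big1 => [|r rn].
  by rewrite !mxE eqxx mulr1 addr0.
by rewrite !mxE eq_sym (negbTE rn) mulr0.
Qed.

Lemma innerE (u v : vec) : inner u v = \sum_i u 0 i * v 0 i.
Proof. by []. Qed.

Lemma enorm_ge0 (u : vec) : 0 <= enorm u.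
Proof. exact: sqrtr_ge0. Qed.

Lemma enorm_sq (u : vec) : enorm u ^+ 2 = \sum_i u 0 i ^+ 2.
Proof.
rewrite /enorm sqr_sqrtr; first by apply: eq_bigr => i _; rewrite expr2.
by apply: sumr_ge0 => i _; rewrite -expr2 sqr_ge0.
Qed.

Lemma enorm_le (u v : vec) : enorm u <= enorm v <-> \sum_i u 0 i ^+ 2 <= \sum_i v 0 i ^+ 2.
Proof.
rewrite -!enorm_sq; split => H.
  by rewrite ler_pXn2r // ?nnegrE ?enorm_ge0.
by rewrite -(ler_pXn2r (_ : 0 < 2)%N) // ?nnegrE ?enorm_ge0.
Qed.


Lemma sum_quad (f g : 'I_n -> R) (t : R) :
  \sum_i (f i - t * g i) ^+ 2 =
  \sum_i f i ^+ 2 - 2 * t * \sum_i f i * g i + t ^+ 2 * \sum_i g i ^+ 2.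
Proof.
rewrite !mulr_sumr -sumrB -big_split /=; apply: eq_bigr => i _; ring.
Qed.

Lemma blockVI (Z : 'I_d -> set vec) (y p z : vec) r :
  (forall r, convex_set (Z r)) -> is_proj (prodset blk Z) y p ->
  prodset blk Z z ->
  \sum_(i | blk i == r) (y 0 i - p 0 i) * (z 0 i - p 0 i) <= 0.
Proof.
move=> cvx [Xp pmin] Xz.
set S := \sum_(i | blk i == r) _.
pose u : vec := \row_i (if blk i == r then z 0 i - p 0 i else 0).
set Q := \sum_i u 0 i ^+ 2.
have Q0 : 0 <= Q by apply: sumr_ge0 => i _; rewrite sqr_ge0.
have SE : \sum_i (y 0 i - p 0 i) * u 0 i = S.
  rewrite /S [RHS]big_mkcond /=; apply: eq_bigr => i _; rewrite mxE.
  by case: ifP => _; rewrite ?mulr0.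
have key : forall th, 0 <= th -> th <= 1 -> 2 * th * S <= th ^+ 2 * Q.
  move=> th th0 th1.
  have Xpt : prodset blk Z (p + th *: u).
    move=> s; have [sr|sr] := eqVneq s r.
      subst s.
      have := cvx r (blockproj blk r z) (blockproj blk r p) (Itv01 th0 th1).
      rewrite !in_setE => /(_ (Xz r) (Xp r)).
      suff -> : blockproj blk r (p + th *: u) =
        (th *: blockproj blk r z + (1 - th) *: blockproj blk r p) by [].
      apply/rowP => i.
      by rewrite !mxE; case: (blk i == r) => /=; ring.
    have -> : blockproj blk s (p + th *: u) = blockproj blk s p; last exact: Xp.
    apply/rowP => i; rewrite !mxE.
    case: (eqVneq (blk i) s) => [bs|bs];
      [rewrite bs (negbTE sr) | ]; ring.
  have := pmin _ Xpt; rewrite enorm_le.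
  have -> : \sum_(i < n) (y - (p + th *: u)) 0 i ^+ 2 =
            \sum_(i < n) ((y 0 i - p 0 i) - th * u 0 i) ^+ 2.
    by apply: eq_bigr => i _; rewrite !mxE opprD addrA.
  rewrite sum_quad SE.
  have -> : \sum_(i < n) (y - p) 0 i ^+ 2 = \sum_(i < n) (y 0 i - p 0 i) ^+ 2.
    by apply: eq_bigr => i _; rewrite !mxE.
  rewrite -/Q; lra.
rewrite leNgt; apply/negP => S0.
have SQ0 : 0 < S + Q by lra.
pose th := S / (S + Q).
have th0 : 0 < th by rewrite divr_gt0.
have th1 : th <= 1 by rewrite ler_pdivrMr // mul1r; lra.
have thE : th * (S + Q) = S by rewrite /th mulfVK // gt_eqF.
have := key th (ltW th0) th1.
have -> : th ^+ 2 * Q = th * (th * Q) by rewrite expr2 mulrA.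
move=> H.
have tQ : th * Q = S - th * S by move: thE; rewrite mulrDr; lra.
rewrite tQ mulrBr in H.
have h1 : 0 < th * S by rewrite mulr_gt0.
have h2 : 0 < th * (th * S) by rewrite mulr_gt0.
lra.
Qed.


Lemma wVI (Z : 'I_d -> set vec) (y p z : vec) (c : 'I_d -> R) :
  (forall r, 0 <= c r) ->
  (forall r, convex_set (Z r)) -> is_proj (prodset blk Z) y p ->
  prodset blk Z z ->
  \sum_i c (blk i) * ((y 0 i - p 0 i) * (z 0 i - p 0 i)) <= 0.
Proof.
move=> c0 cvx pr Xz.
rewrite (partition_big blk xpredT) //=; apply: sumr_le0 => r _.
rewrite (eq_bigr (fun i => c r * ((y 0 i - p 0 i) * (z 0 i - p 0 i)))); last first.
  by move=> i /eqP->.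
rewrite -mulr_sumr mulr_ge0_le0 //.
exact: (@blockVI _ _ _ _ r cvx pr Xz).
Qed.

Lemma CS (P : pred 'I_n) (f g : 'I_n -> R) :
  \sum_(i | P i) f i * g i <=
  Num.sqrt (\sum_(i | P i) f i ^+ 2) * Num.sqrt (\sum_(i | P i) g i ^+ 2).
Proof.
set U := \sum_(i | P i) f i ^+ 2; set V := \sum_(i | P i) g i ^+ 2.
have U0 : 0 <= U by apply: sumr_ge0 => i _; rewrite sqr_ge0.
have V0 : 0 <= V by apply: sumr_ge0 => i _; rewrite sqr_ge0.
have [Ue|Un] := eqVneq U 0.
  rewrite big1 ?mulr_ge0 ?sqrtr_ge0 // => i Pi.
  have := psumr_eq0P (fun i _ => sqr_ge0 (f i)) Ue Pi.
  by move/eqP; rewrite sqrf_eq0 => /eqP->; rewrite mul0r.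
have [Ve|Vn] := eqVneq V 0.
  rewrite big1 ?mulr_ge0 ?sqrtr_ge0 // => i Pi.
  have := psumr_eq0P (fun i _ => sqr_ge0 (g i)) Ve Pi.
  by move/eqP; rewrite sqrf_eq0 => /eqP->; rewrite mulr0.
set a := Num.sqrt U; set b := Num.sqrt V.
have a0 : 0 < a by rewrite sqrtr_gt0 lt_neqAle eq_sym Un.
have b0 : 0 < b by rewrite sqrtr_gt0 lt_neqAle eq_sym Vn.
have aU : a ^+ 2 = U by rewrite sqr_sqrtr.
have bV : b ^+ 2 = V by rewrite sqr_sqrtr.
have H : 2 * a * b * \sum_(i | P i) f i * g i <= b ^+ 2 * U + a ^+ 2 * V.
  rewrite /U /V !mulr_sumr -big_split /=; apply: ler_sum => i _.
  rewrite -subr_ge0 (_ : _ - _ = (b * f i - a * g i) ^+ 2) ?sqr_ge0 //; ring.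
rewrite aU bV in H.
have ab0 : 0 < a * b by rewrite mulr_gt0.
rewrite -(ler_pM2l ab0); rewrite -aU -bV in H; nra.
Qed.

Lemma step_ineq (c u p q s g g' : 'I_n -> R) (eta : R) :
  (forall i, 0 <= c i) ->
  \sum_i c i * ((u i - eta * g' i - p i) * (q i - p i)) <= 0 ->
  \sum_i c i * ((u i - eta * g i - q i) * (s i - q i)) <= 0 ->
  4 * eta * (\sum_i c i * (g i * (p i - s i)))
  + 2 * (\sum_i c i * (q i - s i) ^+ 2) + 2 * (\sum_i c i * (u i - p i) ^+ 2)
  + \sum_i c i * (p i - q i) ^+ 2
  <= 2 * (\sum_i c i * (u i - s i) ^+ 2)
     + 4 * eta ^+ 2 * (\sum_i c i * (g i - g' i) ^+ 2).
Proof.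
move=> c0; set V1 := \sum_i _ * _ => V1n; set V2 := \sum_i _ * _ => V2n.
suff H : 4 * eta * (\sum_i c i * (g i * (p i - s i)))
  + 2 * (\sum_i c i * (q i - s i) ^+ 2) + 2 * (\sum_i c i * (u i - p i) ^+ 2)
  + \sum_i c i * (p i - q i) ^+ 2
  <= 2 * (\sum_i c i * (u i - s i) ^+ 2)
     + 4 * eta ^+ 2 * (\sum_i c i * (g i - g' i) ^+ 2) + 4 * V1 + 4 * V2 by lra.
rewrite /V1 /V2 !mulr_sumr -!big_split /=; apply: ler_sum => i _.
rewrite -subr_ge0 (_ : _ - _ = c i * (2 * eta * (g i - g' i) - (p i - q i)) ^+ 2).
  by rewrite mulr_ge0 ?sqr_ge0.
ring.
Qed.


Lemma coord_bound (A : set vec) : compact A ->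
  exists M, forall x, A x -> forall i, `|x 0 i| <= M.
Proof.
move=> /compact_bounded [M [_ HM]]; exists (M + 1) => x Ax i.
have M1 : M < M + 1 by rewrite ltrDl ltr01.
have /= := HM (M + 1) M1 x Ax.
apply: le_trans.
rewrite [X in _ <= X]/Num.norm /= mx_normrE.
exact: (le_bigmax _ (fun ij : 'I_1 * 'I_n => `|x ij.1 ij.2|) (0, i)).
Qed.


Lemma sqr_le (a b : R) : 0 <= a -> a <= b -> a ^+ 2 <= b ^+ 2.
Proof.
move=> a0 ab; rewrite ler_pXn2r // ?nnegrE //; exact: le_trans ab.
Qed.
Arguments sqr_le {a b}.

Lemma sqr_le_norm (a b : R) : `|a| <= b -> a ^+ 2 <= b ^+ 2.
Proof. by move=> H; rewrite -real_normK ?num_real //; apply: sqr_le. Qed.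
Arguments sqr_le_norm {a b}.

Lemma sqrt_le2 (x e : R) : 0 <= e -> x <= e ^+ 2 -> Num.sqrt x <= e.
Proof.
move=> e0 H; rewrite -(ger0_norm e0) -sqrtr_sqr ler_sqrt ?sqr_ge0 //.
Qed.

Lemma sum_sub (P : pred 'I_n) (f : 'I_n -> R) :
  \sum_(i | P i) f i ^+ 2 <= \sum_i f i ^+ 2.
Proof.
rewrite big_mkcond /=; apply: ler_sum => i _; case: ifP => // _; exact: sqr_ge0.
Qed.

Lemma sum_const_n (c : R) : \sum_(i < n) c = n%:R * c.
Proof. by rewrite sumr_const card_ord mulr_natl. Qed.

Lemma sum_const_d (c : R) : \sum_(i < d) c = d%:R * c.
Proof. by rewrite sumr_const card_ord mulr_natl. Qed.

Lemma enormE (u : vec) : enorm u = Num.sqrt (\sum_i u 0 i ^+ 2).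
Proof. by rewrite /enorm /inner; congr Num.sqrt; apply: eq_bigr => i _; rewrite expr2. Qed.

Lemma diam_ub (A : set vec) M : (forall x, A x -> forall i, `|x 0 i| <= M) ->
  forall u v, A u -> A v -> enorm (u - v) <= diam A.
Proof.
move=> HM u v Au Av; rewrite /diam.
apply: ub_le_sup; last by exists u => //; exists v.
exists (Num.sqrt (n%:R * (2 * M) ^+ 2)) => _ [x Ax [y Ay <-]].
rewrite enormE ler_sqrt; last by rewrite mulr_ge0 ?ler0n ?sqr_ge0.
apply: le_trans (_ : _ <= \sum_(i < n) (2 * M) ^+ 2) _; last by rewrite sum_const_n.
apply: ler_sum => i _; rewrite !mxE; apply: sqr_le_norm.
have := ler_normB (x 0 i) (y 0 i); have := HM x Ax i; have := HM y Ay i; lra.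
Qed.

Lemma projVI (Z : 'I_d -> set vec) (u g p z : vec) (eta : R) (c : 'I_d -> R) :
  (forall r, 0 <= c r) ->
  (forall r, convex_set (Z r)) -> is_proj (prodset blk Z) (u - eta *: g) p ->
  prodset blk Z z ->
  \sum_i c (blk i) * ((u 0 i - eta * g 0 i - p 0 i) * (z 0 i - p 0 i)) <= 0.
Proof.
move=> c0 cvx pr Xz; apply: le_trans (@wVI _ _ _ _ _ c0 cvx pr Xz).
by rewrite le_eqVlt; apply/orP; left; apply/eqP; apply: eq_bigr => i _; rewrite !mxE.
Qed.

Lemma nonexp (u p q g g' : 'I_n -> R) (eta : R) :
  \sum_i ((u i - eta * g' i - p i) * (q i - p i)) <= 0 ->
  \sum_i ((u i - eta * g i - q i) * (p i - q i)) <= 0 ->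
  \sum_i (p i - q i) ^+ 2 <= eta ^+ 2 * \sum_i (g i - g' i) ^+ 2.
Proof.
set V1 := \sum_i _; set V2 := \sum_i _ => V1n V2n.
suff H : \sum_i (p i - q i) ^+ 2 <= eta ^+ 2 * \sum_i (g i - g' i) ^+ 2 + 2 * V1 + 2 * V2
  by lra.
rewrite /V1 /V2 !mulr_sumr -!big_split /=; apply: ler_sum => i _.
rewrite -subr_ge0 (_ : _ - _ = (eta * (g i - g' i) - (p i - q i)) ^+ 2) ?sqr_ge0 //.
ring.
Qed.

Lemma telescope1 (M A B Phi : nat -> R) (e : R) :
  (forall t, (1 <= t)%N ->
     4 * e * M t + 2 * Phi t.+1 + A t + B t <= 2 * Phi t + B t.-1) ->
  forall N, 4 * e * (\sum_(1 <= t < N.+1) M t) + 2 * Phi N.+1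
            + \sum_(1 <= t < N.+1) A t + B N <= 2 * Phi 1 + B 0.
Proof.
move=> H; elim => [|N IH]; first by rewrite !big_geq //; lra.
rewrite !(@big_nat_recr _ _ _ N.+1) //=; have := H N.+1 isT => /= HN; lra.
Qed.

Lemma telescope2 (A B : nat -> R) :
  (forall t, (1 <= t)%N -> 4 * B t <= A t + B t.-1) -> B 0 = 0 ->
  forall N, 3 * (\sum_(1 <= t < N.+1) B t) + B N <= \sum_(1 <= t < N.+1) A t.
Proof.
move=> H B0; elim => [|N IH]; first by rewrite !big_geq // B0; lra.
rewrite !(@big_nat_recr _ _ _ N.+1) //=; have := H N.+1 isT => /= HN; lra.
Qed.


Lemma lip_g (Z : 'I_d -> set vec) (F : vec -> vec) (a : 'I_d -> vec -> R)
  (L alpha h B : R) (x y : vec) :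
  (forall x y, prodset blk Z x -> prodset blk Z y ->
     enorm (F x - F y) <= L * enorm (x - y)) ->
  (forall r x y, prodset blk Z x -> prodset blk Z y ->
     `|a r x - a r y| <= alpha * enorm (x - y)) ->
  (forall i, 0 <= a (blk i) x <= h) ->
  (forall r, enorm (blockproj blk r (F y)) <= B) ->
  prodset blk Z x -> prodset blk Z y ->
  \sum_i (a (blk i) x * F x 0 i - a (blk i) y * F y 0 i) ^+ 2 <=
  2 * (h ^+ 2 * L ^+ 2 + d%:R * alpha ^+ 2 * B ^+ 2) * \sum_i (x 0 i - y 0 i) ^+ 2.
Proof.
move=> FL aL ab FB Xx Xy.
set E := \sum_i (x 0 i - y 0 i) ^+ 2.
have E0 : 0 <= E by apply: sumr_ge0 => i _; rewrite sqr_ge0.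
have eE : enorm (x - y) ^+ 2 = E.
  by rewrite enorm_sq; apply: eq_bigr => i _; rewrite !mxE.
have FL2 : \sum_i (F x 0 i - F y 0 i) ^+ 2 <= L ^+ 2 * E.
  have := sqr_le (enorm_ge0 _) (FL x y Xx Xy); rewrite exprMn eE enorm_sq.
  suff -> : \sum_i (F x - F y) 0 i ^+ 2 = \sum_i (F x 0 i - F y 0 i) ^+ 2 by [].
  by apply: eq_bigr => i _; rewrite !mxE.
have aL2 r : (a r x - a r y) ^+ 2 <= alpha ^+ 2 * E.
  rewrite -eE -exprMn; apply: sqr_le_norm; exact: aL.
have FB2 r : \sum_(i | blk i == r) F y 0 i ^+ 2 <= B ^+ 2.
  have := sqr_le (enorm_ge0 _) (FB r); rewrite enorm_sq.
  apply: le_trans; rewrite le_eqVlt; apply/orP; left; apply/eqP.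
  rewrite [LHS]big_mkcond; apply: eq_bigr => i _; rewrite blockprojE.
  by case: ifP => _ //; rewrite expr2 mul0r.
apply: le_trans (_ : _ <= \sum_i (2 * h ^+ 2 * (F x 0 i - F y 0 i) ^+ 2
   + 2 * ((a (blk i) x - a (blk i) y) ^+ 2 * F y 0 i ^+ 2))) _.
  apply: ler_sum => i _.
  have /andP[a0 ah] := ab i.
  have ah2 := sqr_le a0 ah.
  rewrite -subr_ge0 (_ : _ - _ = 2 * (h ^+ 2 - a (blk i) x ^+ 2) * (F x 0 i - F y 0 i) ^+ 2
     + (a (blk i) x * (F x 0 i - F y 0 i) - (a (blk i) x - a (blk i) y) * F y 0 i) ^+ 2).
    by rewrite addr_ge0 ?sqr_ge0 // mulr_ge0 ?sqr_ge0 // mulr_ge0 // subr_ge0.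
  ring.
rewrite big_split /= -!mulr_sumr.
have S2 : \sum_i (a (blk i) x - a (blk i) y) ^+ 2 * F y 0 i ^+ 2 <=
          d%:R * (alpha ^+ 2 * E * B ^+ 2).
  rewrite (partition_big blk xpredT) //=.
  apply: le_trans (_ : _ <= \sum_(r < d) (alpha ^+ 2 * E * B ^+ 2)) _; last first.
    by rewrite sum_const_d.
  apply: ler_sum => r _.
  rewrite (eq_bigr (fun i => (a r x - a r y) ^+ 2 * F y 0 i ^+ 2)); last first.
    by move=> i /eqP->.
  rewrite -mulr_sumr; apply: ler_pM.
  - exact: sqr_ge0.
  - by apply: sumr_ge0 => i _; rewrite sqr_ge0.
  - exact: aL2.
  - exact: FB2.
have := ler_wpM2l (sqr_ge0 h) FL2.
lra.
Qed.

Lemma gap_bound (Z : 'I_d -> set vec) (F : vec -> vec) (a : 'I_d -> vec -> R)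
  (u p q z : vec) (eta l h B Dm e : R) :
  (forall r, Z r !=set0) ->
  (forall r, convex_set (Z r)) ->
  is_proj (prodset blk Z) (u - eta *: hadamard (blockfun blk a p) (F p)) q ->
  prodset blk Z z ->
  0 < l -> 0 < eta -> 0 <= e -> 0 <= h * B ->
  (forall i, l <= a (blk i) p <= h) ->
  (forall r, enorm (blockproj blk r (F p)) <= B) ->
  (forall r v v', Z r v -> Z r v' -> enorm (v - v') <= Dm) ->
  Num.sqrt (\sum_i (u 0 i - q 0 i) ^+ 2) <= 2 * e ->
  Num.sqrt (\sum_i (p 0 i - q 0 i) ^+ 2) <= 2 * e ->
  inner p (F p) - inner z (F p) <= 2 * d%:R * (Dm / (eta * l) + h * B / l) * e.
Proof.
move=> Zne cvx pr Xz l0 eta0 e0 hB0 aB FB DZ d1 d2.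
have Xq := pr.1.
set C := 2 * (Dm / (eta * l) + h * B / l) * e.
have -> : 2 * d%:R * (Dm / (eta * l) + h * B / l) * e = \sum_(r < d) C.
  by rewrite sum_const_d /C; ring.
have -> : inner p (F p) - inner z (F p) = \sum_i (p 0 i - z 0 i) * F p 0 i.
  by rewrite /inner -sumrB; apply: eq_bigr => i _; ring.
rewrite (partition_big blk xpredT) //=.
apply: ler_sum => r _.
have Dm0 : 0 <= Dm.
  have [v Zv] := Zne r; apply: le_trans (DZ r v v Zv Zv).
  exact: enorm_ge0.
have B0 : 0 <= B by apply: le_trans (FB r); exact: enorm_ge0.
have C0 : 0 <= C.
  rewrite /C mulr_ge0 // mulr_ge0 // addr_ge0 //.
    by rewrite divr_ge0 // mulr_ge0 // ltW.
  by rewrite divr_ge0 // ltW.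
case: (pselect (exists i, blk i = r)) => [[i0 bi0] | none]; last first.
  rewrite big_pred0 // => i /=; apply/negP => /eqP bi; apply: none; by exists i.
have /andP[la ah] := aB i0; rewrite bi0 in la ah.
have ar0 : 0 < a r p by apply: lt_le_trans la.
set S := \sum_(i | _) _.
set S2 := \sum_(i | blk i == r) F p 0 i * (q 0 i - z 0 i).
set S3 := \sum_(i | blk i == r) F p 0 i * (p 0 i - q 0 i).
set S1 := \sum_(i | blk i == r) (u 0 i - q 0 i) * (q 0 i - z 0 i).
have SE : S = S2 + S3.
  by rewrite /S2 /S3 -big_split /S; apply: eq_big => [i|i _] //=; ring.
have VI' : eta * a r p * S2 <= S1.
  have VI := @blockVI Z _ _ z r cvx pr Xz.
  rewrite -subr_le0; apply: le_trans VI; rewrite le_eqVlt; apply/orP; left; apply/eqP.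
  rewrite /S1 /S2 mulr_sumr -sumrB; apply: eq_bigr => i /eqP bi.
  by rewrite !mxE blockfunE bi; ring.
have bpE (v v' : vec) : \sum_(i | blk i == r) (v 0 i - v' 0 i) ^+ 2 =
    \sum_i (blockproj blk r v - blockproj blk r v') 0 i ^+ 2.
  rewrite big_mkcond; apply: eq_bigr => i _; rewrite !mxE.
  by case: (blk i == r) => /=; ring.
have S1b : S1 <= 2 * e * Dm.
  apply: le_trans (CS _ _ _) _.
  apply: ler_pM; rewrite ?sqrtr_ge0 //.
    apply: le_trans d1; rewrite ler_sqrt; first exact: sum_sub.
    by apply: sumr_ge0 => i _; rewrite sqr_ge0.
  rewrite bpE -enormE; exact: DZ (Xq r) (Xz r).
have S3b : S3 <= B * (2 * e).
  apply: le_trans (CS _ _ _) _.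
  apply: ler_pM; rewrite ?sqrtr_ge0 //.
    apply: le_trans (FB r); rewrite enormE ler_sqrt; last first.
      by apply: sumr_ge0 => i _; rewrite sqr_ge0.
    rewrite le_eqVlt; apply/orP; left; apply/eqP.
    rewrite big_mkcond; apply: eq_bigr => i _; rewrite blockprojE.
    by case: (blk i == r) => /=; ring.
  apply: le_trans d2; rewrite ler_sqrt; first exact: sum_sub.
  by apply: sumr_ge0 => i _; rewrite sqr_ge0.
have etal0 : 0 < eta * l by rewrite mulr_gt0.
have CE : eta * l * C = 2 * e * Dm + eta * h * (B * (2 * e)).
  rewrite /C; field; rewrite ?gt_eqF //.
have [S0|S0] := lerP S 0; first exact: le_trans S0 C0.
rewrite -(ler_pM2l etal0) CE.
have H1 : eta * l * S <= eta * a r p * S.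
  by apply: ler_wpM2r; [exact: ltW | apply: ler_wpM2l => //; exact: ltW].
have H2 : eta * a r p * S = eta * a r p * S2 + eta * a r p * S3 by rewrite SE; ring.
have H3 : eta * a r p * S3 <= eta * a r p * (B * (2 * e)).
  by apply: ler_wpM2l => //; rewrite mulr_ge0 // ltW.
have H4 : eta * a r p * (B * (2 * e)) <= eta * h * (B * (2 * e)).
  rewrite -!mulrA; apply: ler_wpM2l; first exact: ltW.
  by apply: ler_wpM2r => //; rewrite mulr_ge0 // mulr_ge0 // ltW.
lra.
Qed.

End S.


Arguments blockprojE {R n d blk r x i}.
Arguments blockfunE {R n d blk a x i}.
Arguments enorm_sq {R n u}.
Arguments enorm_le {R n u v}.
Arguments enormE {R n u}.
Arguments enorm_ge0 {R n u}.
Arguments sum_sub {R n P f}.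
Arguments sum_const_n {R n c}.
Arguments sum_const_d {R d c}.
Arguments blockVI {R n d blk Z y p z} r.
Arguments wVI {R n d blk Z y p z c}.
Arguments CS {R n P f g}.
Arguments step_ineq {R n c u p q s g g' eta}.
Arguments coord_bound {R n A}.
Arguments sqr_le {R a b}.
Arguments sqr_le_norm {R a b}.
Arguments sqrt_le2 {R x e}.
Arguments diam_ub {R n A M}.
Arguments projVI {R n d blk Z u g p z eta} c.
Arguments nonexp {R n u p q g g' eta}.
Arguments telescope1 {R M A B Phi e}.
Arguments telescope2 {R A B}.
Arguments lip_g {R n d blk Z F a L alpha h B x y}.
Arguments gap_bound {R n d blk Z F a u p q z eta l h B Dm e}.

Theorem theorem2 (R : realType) (n d : nat) (blk : 'I_n -> 'I_d)
  (Z : 'I_d -> set 'rV[R]_n)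
  (F : 'rV[R]_n -> 'rV[R]_n) (L : R)
  (a w : 'I_d -> 'rV[R]_n -> R) (alpha l h : R)
  (eta eps : R) (T : nat)
  (xs xh : nat -> 'rV[R]_n) :
  (* X = prod_r Z_r, Z_r nonempty convex compact, living on block r *)
  (forall r, Z r !=set0) ->
  (forall r, convex_set (Z r)) ->
  (forall r, compact (Z r)) ->
  (forall r z, Z r z -> blockproj blk r z = z) ->
  (* F is L-Lipschitz on X *)
  (forall x y, prodset blk Z x -> prodset blk Z y ->
     enorm (F x - F y) <= L * enorm (x - y)) ->
  (* A = sum_r a_r 1_{Z_r}, a_r alpha-Lipschitz, 0 < l <= A <= h *)
  0 < l ->
  (forall r x y, prodset blk Z x -> prodset blk Z y ->
     `|a r x - a r y| <= alpha * enorm (x - y)) ->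
  (forall x i, prodset blk Z x ->
     l <= blockfun blk a x 0 i <= h) ->
  (* W = sum_r w_r 1_{Z_r}, 0 < l <= W <= h *)
  (forall x i, prodset blk Z x ->
     l <= blockfun blk w x 0 i <= h) ->
  (* average generalized Minty property *)
  avg_gen_minty (prodset blk Z) F (blockfun blk a) (blockfun blk w) ->
  (* parameters *)
  0 < eps ->
  0 < eta ->
  16 * eta ^+ 2 * (h ^+ 3 * L ^+ 2 + h * BF blk (prodset blk Z) F ^+ 2 * alpha ^+ 2 * d%:R) <= l ->
  (0 < T)%N ->
  2 * diam (prodset blk Z) ^+ 2 * h / (l * eps ^+ 2) <= T%:R ->
  (* rescaled optimistic gradient descent *)
  prodset blk Z (xs 0%N) ->
  xh 1%N = xs 0%N ->
  (forall t, (1 <= t)%N ->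
     is_proj (prodset blk Z)
       (xh t - eta *: hadamard (blockfun blk a (xs t.-1)) (F (xs t.-1))) (xs t)) ->
  (forall t, (1 <= t)%N ->
     is_proj (prodset blk Z)
       (xh t - eta *: hadamard (blockfun blk a (xs t)) (F (xs t))) (xh t.+1)) ->
  exists2 t, (1 <= t <= T)%N &
    forall xst, prodset blk Z xst ->
      inner (xs t) (F (xs t)) - inner xst (F (xs t)) <=
      2 * d%:R * (maxdiam Z / (eta * l) + h * BF blk (prodset blk Z) F / l) * eps.
Proof.
move=> Zne cvx cpt supp FL l0 aL aB wB Minty eps0 eta0 etaH T0 TH Xx0 xh1 Pxs Pxh.
set X := prodset blk Z in FL aL aB wB Minty etaH TH Xx0 Pxs Pxh *.
set B := BF blk X F in etaH *.
set D := diam X in TH.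
set Dm := maxdiam Z.
have Xxs : forall t, X (xs t).
  by case=> [|t] //; exact: (Pxs t.+1 isT).1.
have Xxh : forall t, (1 <= t)%N -> X (xh t).
  case=> [//|[|t] _]; first by rewrite xh1.
  exact: (Pxh t.+1 isT).1.
have aE : forall x i, X x -> l <= a (blk i) x <= h.
  by move=> x i Xx; have := aB x i Xx; rewrite blockfunE.
have wE : forall x i, X x -> l <= w (blk i) x <= h.
  by move=> x i Xx; have := wB x i Xx; rewrite blockfunE.
have [Mf HMf] := boolp.choice (fun r => coord_bound (cpt r)).
set MX := \big[Num.max/0]_r Mf r.
have HX : forall x, X x -> forall i, `|x 0 i| <= MX.
  move=> x Xx i; have := HMf (blk i) _ (Xx (blk i)) i.
  rewrite blockprojE eqxx => H; apply: le_trans H _.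
  exact: (le_bigmax _ Mf (blk i)).
have DX u v : X u -> X v -> enorm (u - v) <= D := diam_ub HX u v.
have DZ r u v : Z r u -> Z r v -> enorm (u - v) <= Dm.
  move=> Zu Zv; apply: le_trans (diam_ub (HMf r) u v Zu Zv) _.
  exact: (le_bigmax _ (fun r => diam (Z r)) r).
have Dm0 : 0 <= Dm by exact: bigmax_ge_id.
have B0 : 0 <= B by exact: bigmax_ge_id.
case: (posnP n) => [n0|npos].
  have sum0 : forall f : 'I_n -> R, \sum_i f i = 0.
    move=> f; apply: big1 => -[m Hm] _; exfalso; move: Hm; rewrite n0 //.
  have BB : B = 0.
    apply/eqP; rewrite eq_le B0 andbT /B /BF.
    apply: bigmax_le => // r _.
    apply: ge_sup; first by exists (enorm (blockproj blk r (F (xs 0)))); exists (xs 0).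
    by move=> _ [x _ <-]; rewrite enormE sum0 sqrtr0.
  exists 1%N; first by rewrite leqnn T0.
  move=> z Xz; rewrite /inner !sum0 subrr BB mulr0 mul0r addr0.
  apply: mulr_ge0; last exact: ltW eps0.
  apply: mulr_ge0; first by rewrite mulr_ge0 ?ler0n.
  by rewrite divr_ge0 // mulr_ge0 // ltW.
have i0 : 'I_n := Ordinal npos.
have /andP[la0 ah0] := aE (xs 0%N) i0 (Xxs 0%N).
have lh : l <= h := le_trans la0 ah0.
have hpos : 0 < h := lt_le_trans l0 lh.
have [s Xs Mpos] := Minty T xs (fun t _ => Xxs t).
pose cc i := w (blk i) s.
have ccb i : l <= cc i <= h := wE s i Xs.
have cc0 i : 0 <= cc i.
  by have /andP[H _] := ccb i; exact: le_trans (ltW l0) H.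
pose xv t i := xs t 0 i.
pose hv t i := xh t 0 i.
pose sv i := s 0 i.
pose gv t i := a (blk i) (xs t) * F (xs t) 0 i.
pose Phi t := \sum_i cc i * (hv t i - sv i) ^+ 2.
pose Aw t := \sum_i cc i * (hv t i - xv t i) ^+ 2.
pose Bw t := \sum_i cc i * (xv t i - hv t.+1 i) ^+ 2.
pose Mt t := \sum_i cc i * (gv t i * (xv t i - sv i)).
pose Gt t := \sum_i cc i * (gv t i - gv t.-1 i) ^+ 2.
pose AE t := \sum_i (hv t i - xv t i) ^+ 2.
pose BE t := \sum_i (xv t i - hv t.+1 i) ^+ 2.
pose K0 := h ^+ 2 * L ^+ 2 + d%:R * alpha ^+ 2 * B ^+ 2.
have K00 : 0 <= K0.
  rewrite /K0; apply: addr_ge0; first by rewrite mulr_ge0 ?sqr_ge0.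
  by rewrite mulr_ge0 ?sqr_ge0 // mulr_ge0 ?sqr_ge0 ?ler0n.
have etaK : 16 * eta ^+ 2 * (h * K0) <= l.
  apply: le_trans etaH; rewrite le_eqVlt; apply/orP; left; apply/eqP.
  by rewrite /K0; ring.
have etaK1 : 16 * eta ^+ 2 * K0 <= 1.
  rewrite -(ler_pM2l hpos) mulr1; apply: le_trans lh.
  by apply: le_trans etaK; rewrite le_eqVlt; apply/orP; left; apply/eqP; ring.
have sq0 (f : 'I_n -> R) : 0 <= \sum_i f i ^+ 2.
  by apply: sumr_ge0 => i _; rewrite sqr_ge0.
have wsq0 (f : 'I_n -> R) : 0 <= \sum_i cc i * f i ^+ 2.
  by apply: sumr_ge0 => i _; rewrite mulr_ge0 ?sqr_ge0.
have lw (f : 'I_n -> R) : l * \sum_i f i ^+ 2 <= \sum_i cc i * f i ^+ 2.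
  rewrite mulr_sumr; apply: ler_sum => i _; apply: ler_wpM2r; first exact: sqr_ge0.
  by have /andP[] := ccb i.
have hw (f : 'I_n -> R) : \sum_i cc i * f i ^+ 2 <= h * \sum_i f i ^+ 2.
  rewrite mulr_sumr; apply: ler_sum => i _; apply: ler_wpM2r; first exact: sqr_ge0.
  by have /andP[] := ccb i.
have FBx : forall r x, X x -> enorm (blockproj blk r (F x)) <= B.
  move=> r x Xx; rewrite /B /BF.
  apply: le_trans (le_bigmax _ (fun r => sup [set enorm (blockproj blk r (F x)) | x in X]) r).
  apply: ub_le_sup; last by exists x.
  exists (Num.sqrt (2 * \sum_i F (xs 0%N) 0 i ^+ 2 + 2 * (L ^+ 2 * D ^+ 2))) => _ [y Xy <-].
  rewrite enormE ler_sqrt; last first.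
    by rewrite addr_ge0 // mulr_ge0 // ?sq0 // mulr_ge0 // sqr_ge0.
  have h1 : \sum_i (blockproj blk r (F y)) 0 i ^+ 2 <= \sum_i F y 0 i ^+ 2.
    apply: ler_sum => i _; rewrite blockprojE; case: ifP => _ //.
    by rewrite expr2 mul0r sqr_ge0.
  have h2 : \sum_i F y 0 i ^+ 2 <= 2 * \sum_i F (xs 0%N) 0 i ^+ 2
                                  + 2 * \sum_i (F y 0 i - F (xs 0%N) 0 i) ^+ 2.
    rewrite !mulr_sumr -big_split /=; apply: ler_sum => i _.
    rewrite -subr_ge0 (_ : _ - _ = (F y 0 i - 2 * F (xs 0%N) 0 i) ^+ 2) ?sqr_ge0 //.
    ring.
  have h3 : \sum_i (F y 0 i - F (xs 0%N) 0 i) ^+ 2 <= L ^+ 2 * D ^+ 2.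
    have := sqr_le enorm_ge0 (FL y (xs 0%N) Xy (Xxs 0%N)).
    rewrite exprMn enorm_sq => H.
    have -> : \sum_i (F y 0 i - F (xs 0%N) 0 i) ^+ 2 = \sum_i (F y - F (xs 0%N)) 0 i ^+ 2.
      by apply: eq_bigr => i _; rewrite !mxE.
    apply: le_trans H _; apply: ler_wpM2l; first exact: sqr_ge0.
    exact: sqr_le enorm_ge0 (DX _ _ Xy (Xxs 0%N)).
  lra.
have Lg t : \sum_i (gv t i - gv t.-1 i) ^+ 2 <=
            2 * K0 * \sum_i (xv t i - xv t.-1 i) ^+ 2.
  apply: (lip_g (Z := Z) FL aL _ _ (Xxs t) (Xxs t.-1)).
  - move=> i; have /andP[H1 H2] := aE (xs t) i (Xxs t).
    by rewrite H2 andbT; exact: le_trans (ltW l0) H1.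
  - by move=> r; apply: FBx.
have tri t : (1 <= t)%N -> \sum_i (xv t i - xv t.-1 i) ^+ 2 <=
      2 * AE t + 2 * \sum_i (xv t.-1 i - hv t i) ^+ 2.
  move=> _; rewrite /AE !mulr_sumr -big_split /=; apply: ler_sum => i _.
  rewrite -subr_ge0 (_ : _ - _ = (xv t i + xv t.-1 i - 2 * hv t i) ^+ 2) ?sqr_ge0 //.
  ring.
have BwE t : (1 <= t)%N -> Bw t.-1 = \sum_i cc i * (xv t.-1 i - hv t i) ^+ 2.
  by move=> t1; rewrite /Bw prednK.
have BEE t : (1 <= t)%N -> BE t.-1 = \sum_i (xv t.-1 i - hv t i) ^+ 2.
  by move=> t1; rewrite /BE prednK.
have w0 i : 0 <= w (blk i) s := cc0 i.
have PV (c : 'I_d -> R) (u x p z : 'rV[R]_n) : (forall r, 0 <= c r) ->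
    is_proj X (u - eta *: hadamard (blockfun blk a x) (F x)) p -> X z ->
    \sum_i c (blk i) * ((u 0 i - eta * (a (blk i) x * F x 0 i) - p 0 i)
                        * (z 0 i - p 0 i)) <= 0.
  move=> c0 pr Xz; apply: le_trans (projVI c c0 cvx pr Xz).
  rewrite le_eqVlt; apply/orP; left; apply/eqP; apply: eq_bigr => i _.
  by rewrite mxE blockfunE.
have cw0 r : 0 <= `|w r s| := normr_ge0 _.
have c10 r : 0 <= (fun _ : 'I_d => 1 : R) r := ler01.
have VI1 t : (1 <= t)%N -> \sum_i cc i * ((hv t i - eta * gv t.-1 i - xv t i)
                                * (hv t.+1 i - xv t i)) <= 0.
  move=> t1; have := PV _ _ _ _ _ cw0 (Pxs t t1) (Xxh t.+1 isT).
  apply: le_trans; rewrite le_eqVlt; apply/orP; left; apply/eqP.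
  by apply: eq_bigr => i _; rewrite ger0_norm ?w0.
have VI2 t : (1 <= t)%N -> \sum_i cc i * ((hv t i - eta * gv t i - hv t.+1 i)
                                * (sv i - hv t.+1 i)) <= 0.
  move=> t1; have := PV _ _ _ _ _ cw0 (Pxh t t1) Xs.
  apply: le_trans; rewrite le_eqVlt; apply/orP; left; apply/eqP.
  by apply: eq_bigr => i _; rewrite ger0_norm ?w0.
have VIe1 t : (1 <= t)%N -> \sum_i ((hv t i - eta * gv t.-1 i - xv t i)
                                * (hv t.+1 i - xv t i)) <= 0.
  move=> t1; have := PV _ _ _ _ _ c10 (Pxs t t1) (Xxh t.+1 isT).
  apply: le_trans; rewrite le_eqVlt; apply/orP; left; apply/eqP.
  by apply: eq_bigr => i _; rewrite mul1r.
have VIe2 t : (1 <= t)%N -> \sum_i ((hv t i - eta * gv t i - hv t.+1 i)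
                                * (xv t i - hv t.+1 i)) <= 0.
  move=> t1; have := PV _ _ _ _ _ c10 (Pxh t t1) (Xxs t).
  apply: le_trans; rewrite le_eqVlt; apply/orP; left; apply/eqP.
  by apply: eq_bigr => i _; rewrite mul1r.
have k0 : 0 <= 4 * eta ^+ 2 by rewrite mulr_ge0 ?sqr_ge0.
have step t : (1 <= t)%N ->
    4 * eta * Mt t + 2 * Phi t.+1 + Aw t + Bw t <= 2 * Phi t + Bw t.-1.
  move=> t1.
  have S : 4 * eta * Mt t + 2 * Phi t.+1 + 2 * Aw t + Bw t
           <= 2 * Phi t + 4 * eta ^+ 2 * Gt t := step_ineq cc0 (VI1 t t1) (VI2 t t1).
  have G1 : Gt t <= h * \sum_i (gv t i - gv t.-1 i) ^+ 2 := hw _.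
  have G2 := Lg t.
  have G3 := tri t t1.
  have G4 : l * AE t <= Aw t := lw _.
  have G5 : l * \sum_i (xv t.-1 i - hv t i) ^+ 2 <= Bw t.-1.
    by rewrite BwE //; exact: lw.
  move: G1 G2 G3 G4 G5.
  set Sg := \sum_i (gv t i - gv t.-1 i) ^+ 2.
  set Sx := \sum_i (xv t i - xv t.-1 i) ^+ 2.
  set E2 := \sum_i (xv t.-1 i - hv t i) ^+ 2 => G1 G2 G3 G4 G5.
  have AE0 : 0 <= AE t := sq0 _.
  have E20 : 0 <= E2 := sq0 _.
  have C1 := ler_wpM2l k0 G1.
  have kh : 0 <= 4 * eta ^+ 2 * h by rewrite mulr_ge0 // ltW.
  have C2 := ler_wpM2l kh G2.
  have khk : 0 <= 4 * eta ^+ 2 * h * (2 * K0) by rewrite mulr_ge0 // mulr_ge0.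
  have C3 := ler_wpM2l khk G3.
  have AE20 : 0 <= AE t + E2 by rewrite addr_ge0.
  have C4 := ler_wpM2r AE20 etaK.
  clear -S C1 C2 C3 C4 G4 G5; lra.
have Bw0 : Bw 0%N = 0.
  by rewrite /Bw; apply: big1 => i _ /=; rewrite /hv xh1 subrr expr2 !mulr0.
have tele := telescope1 step T.
have MposE : \sum_(1 <= t < T.+1) Mt t = \sum_(1 <= t < T.+1)
    inner (xs t - s) (hadamard (hadamard (F (xs t)) (blockfun blk a (xs t)))
                                 (blockfun blk w s)).
  apply: eq_bigr => t _; rewrite /inner; apply: eq_bigr => i _.
  rewrite !mxE !blockfunE /cc /gv /xv /sv; ring.
have SA : \sum_(1 <= t < T.+1) Aw t <= 2 * Phi 1%N.
  have M0 : 0 <= 4 * eta * \sum_(1 <= t < T.+1) Mt t.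
    by rewrite MposE mulr_ge0 // mulr_ge0 // ltW.
  have P0 : 0 <= Phi T.+1 := wsq0 _.
  have B0' : 0 <= Bw T := wsq0 _.
  move: tele; rewrite Bw0 => tele; clear -tele M0 P0 B0'; lra.
have Phi1 : Phi 1%N <= h * D ^+ 2.
  apply: le_trans (hw (fun i => hv 1%N i - sv i)) _.
  apply: ler_wpM2l; first exact: ltW.
  have := sqr_le enorm_ge0 (DX _ _ (Xxh 1%N isT) Xs); rewrite enorm_sq.
  apply: le_trans; rewrite le_eqVlt; apply/orP; left; apply/eqP.
  by apply: eq_bigr => i _; rewrite !mxE.
have BEstep t : (1 <= t)%N -> 4 * BE t <= AE t + BE t.-1.
  move=> t1.
  have N : BE t <= eta ^+ 2 * \sum_i (gv t i - gv t.-1 i) ^+ 2 :=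
    nonexp (VIe1 t t1) (VIe2 t t1).
  have G2 := Lg t.
  have G3 := tri t t1.
  rewrite BEE //.
  move: N G2 G3.
  set Sg := \sum_i (gv t i - gv t.-1 i) ^+ 2.
  set Sx := \sum_i (xv t i - xv t.-1 i) ^+ 2.
  set E2 := \sum_i (xv t.-1 i - hv t i) ^+ 2 => N G2 G3.
  have AE0 : 0 <= AE t := sq0 _.
  have E20 : 0 <= E2 := sq0 _.
  have e2 : 0 <= eta ^+ 2 := sqr_ge0 _.
  have C1 := ler_wpM2l e2 G2.
  have ek : 0 <= eta ^+ 2 * (2 * K0) by rewrite mulr_ge0 // mulr_ge0.
  have C2 := ler_wpM2l ek G3.
  have AE20 : 0 <= AE t + E2 by rewrite addr_ge0.
  have C3 := ler_wpM2r AE20 etaK1.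
  clear -N C1 C2 C3; lra.
have BE0 : BE 0%N = 0.
  by rewrite /BE; apply: big1 => i _ /=; rewrite /hv xh1 subrr expr2 mulr0.
have tele2 := telescope2 BEstep BE0 T.
have [t /andP[t1 tT] Ht] : exists2 t, (1 <= t <= T)%N & AE t + BE t <= 2 * eps ^+ 2.
  case: (pselect (exists2 t, (1 <= t <= T)%N & AE t + BE t <= 2 * eps ^+ 2)) => // Hn.
  exfalso.
  have all t : (1 <= t < T.+1)%N -> 2 * eps ^+ 2 <= AE t + BE t.
    rewrite ltnS => Ht; rewrite leNgt; apply/negP => H; apply: Hn; exists t => //.
    exact: ltW.
  have low := ler_sum_nat all.
  rewrite sumr_const_nat subn1 /= big_split /= -mulr_natr in low.
  have SAE : l * \sum_(1 <= t < T.+1) AE t <= \sum_(1 <= t < T.+1) Aw t.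
    by rewrite mulr_sumr; apply: ler_sum_nat => k _; exact: lw.
  have le0 : 0 < l * eps ^+ 2 by rewrite mulr_gt0 // exprn_gt0.
  rewrite ler_pdivrMr // in TH.
  have f1 := ler_wpM2l (ltW l0) low.
  have BT0 : 0 <= BE T := sq0 _.
  have f2 : 3 * (\sum_(1 <= t < T.+1) BE t) <= \sum_(1 <= t < T.+1) AE t.
    clear -tele2 BT0; lra.
  have f2' := ler_wpM2l (ltW l0) f2.
  have T1 : 1 <= (T%:R : R) by rewrite ler1n.
  have P0 : 0 < T%:R * (l * eps ^+ 2) by rewrite mulr_gt0 // (lt_le_trans ltr01 T1).
  clear -f1 f2' SAE SA Phi1 TH P0; lra.
exists t; first by rewrite t1 tT.
move=> z Xz.
have hB0 : 0 <= h * B by rewrite mulr_ge0 // ltW.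
have AE0 : 0 <= AE t := sq0 _.
have BE0' : 0 <= BE t := sq0 _.
have e20 : 0 <= 2 * eps by rewrite mulr_ge0 // ltW.
apply: (gap_bound (Z := Z) (a := a) Zne cvx (Pxh t t1) Xz l0 eta0 (ltW eps0) hB0).
- by move=> i; exact: aE (Xxs t).
- by move=> r; exact: FBx (Xxs t).
- exact: DZ.
- apply: sqrt_le2 => //.
  apply: le_trans (_ : _ <= 2 * AE t + 2 * BE t) _.
    rewrite /AE /BE !mulr_sumr -big_split /=; apply: ler_sum => i _.
    rewrite -subr_ge0 (_ : _ - _ = (hv t i - 2 * xv t i + hv t.+1 i) ^+ 2) ?sqr_ge0 //.
    rewrite /hv /xv; ring.
  rewrite exprMn; clear -Ht; lra.
- apply: sqrt_le2 => //.
  have -> : \sum_i (xs t 0 i - xh t.+1 0 i) ^+ 2 = BE t by [].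
  have := sqr_ge0 eps; rewrite exprMn; clear -Ht AE0; lra.
Qed.
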